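(* Let $\pi=(\pi_n^{n+1}\colon(X_{n+1},f_{n+1})\to(X_n,f_n))_{n\ge1}$ be an inverse sequence of equivariant maps and let $(X,f)=\lim_\pi(X_n,f_n)$. Then $CR(f)=\{x=(x_n)_{n\ge1}\in X: x_n\in CR(f_n)\ \text{for all } n\ge1\}$.
   Context: Each $X_n$ is a compact metric space, $f_n$ a continuous self-map, $\pi_n^{n+1}\colon X_{n+1}\to X_n$ continuous with $f_n\circ\pi_n^{n+1}=\pi_n^{n+1}\circ f_{n+1}$. $X=\{(x_n)\in\prod_n X_n:\pi_n^{n+1}(x_{n+1})=x_n\ \forall n\}$ with the product topology and $f((x_n))=(f_n(x_n))$. For a continuous map $g$ of a compact metric space $(Y,d)$, a $\delta$-chain is a finite sequence $(y_i)_{i=0}^k$, $k>0$, with $d(g(y_i),y_{i+1})\le\delta$ for all $i<k$, and $CR(g)$ is the set of $y$ such that for every $\delta>0$ there is a $\delta$-chain with $y_0=y_k=y$. *)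

(* Defs.v *)
From Stdlib Require Import Reals List.
Open Scope R_scope.

Definition is_metric_on {Y : Type} (A : Y -> Prop) (d : Y -> Y -> R) : Prop :=
  (forall x y, A x -> A y -> 0 <= d x y) /\
  (forall x y, A x -> A y -> (d x y = 0 <-> x = y)) /\
  (forall x y, A x -> A y -> d x y = d y x) /\
  (forall x y z, A x -> A y -> A z -> d x z <= d x y + d y z).

Definition is_metric {Y : Type} (d : Y -> Y -> R) : Prop :=
  is_metric_on (fun _ => True) d.

Definition metric_open_on {Y : Type} (A : Y -> Prop) (d : Y -> Y -> R)
  (U : Y -> Prop) : Prop :=
  forall x, U x -> exists eps, 0 < eps /\
    forall y, A y -> d x y < eps -> U y.

Definition compact_metric {Y : Type} (d : Y -> Y -> R) : Prop :=
  forall (I : Type) (U : I -> Y -> Prop),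
    (forall i, metric_open_on (fun _ => True) d (U i)) ->
    (forall x, exists i, U i x) ->
    exists l : list I, forall x, exists i, In i l /\ U i x.

Definition continuous_metric {Y Z : Type} (dY : Y -> Y -> R)
  (dZ : Z -> Z -> R) (g : Y -> Z) : Prop :=
  forall x eps, 0 < eps -> exists del, 0 < del /\
    forall y, dY x y < del -> dZ (g x) (g y) < eps.

Definition inv_lim {T : nat -> Type} (pi : forall n, T (S n) -> T n)
  (x : forall n, T n) : Prop :=
  forall n, pi n (x (S n)) = x n.

Definition lim_map {T : nat -> Type} (f : forall n, T n -> T n)
  (x : forall n, T n) : forall n, T n :=
  fun n => f n (x n).

(** [U] (a subset of [A]) is open in the subspace topology of [A] inherited
    from the product topology of [prod_n (T n, d n)]: every point of [U] has a
    basic product neighbourhood (finitely many coordinates constrained) whose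
    trace on [A] lies in [U]. *)
Definition prod_open_on {T : nat -> Type} (d : forall n, T n -> T n -> R)
  (A : (forall n, T n) -> Prop) (U : (forall n, T n) -> Prop) : Prop :=
  forall x, U x -> exists (N : nat) (eps : R), 0 < eps /\
    forall y, A y -> (forall i, (i <= N)%nat -> d i (x i) (y i) < eps) -> U y.

Definition induces_product_topology {T : nat -> Type}
  (d : forall n, T n -> T n -> R) (A : (forall n, T n) -> Prop)
  (D : (forall n, T n) -> (forall n, T n) -> R) : Prop :=
  forall U : (forall n, T n) -> Prop, (forall x, U x -> A x) ->
    (metric_open_on A D U <-> prod_open_on d A U).

Definition CR_on {Y : Type} (A : Y -> Prop) (d : Y -> Y -> R) (g : Y -> Y)
  (y : Y) : Prop :=
  A y /\
  forall delta, 0 < delta ->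
    exists (k : nat) (c : nat -> Y),
      (0 < k)%nat /\ (forall i, (i <= k)%nat -> A (c i)) /\
      c 0%nat = y /\ c k = y /\
      (forall i, (i < k)%nat -> d (g (c i)) (c (S i)) <= delta).

Definition CR {Y : Type} (d : Y -> Y -> R) (g : Y -> Y) (y : Y) : Prop :=
  CR_on (fun _ => True) d g y.

(* Main.v *)
Require Import Defs.
From Stdlib Require Import Reals Lra Lia List IndefiniteDescription Eqdep_dec Classical.
Open Scope R_scope.

Lemma arch_inv : forall e, 0 < e -> exists K, forall j, (K <= j)%nat -> / INR (S j) < e.
Proof.
  intros e he. destruct (archimed_cor1 e he) as [N [HN HN0]].
  exists N. intros j hj.
  assert (0 < INR N) by (apply lt_0_INR; lia).
  assert (INR N <= INR (S j)) by (apply le_INR; lia).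
  pose proof (Rinv_le_contravar _ _ H H0). lra.
Qed.

Lemma inv_pos : forall j, 0 < / INR (S j).
Proof. intro j. apply Rinv_0_lt_compat, lt_0_INR; lia. Qed.

Section Gen.
Variable Y : Type.
Variable dY : Y -> Y -> R.
Hypothesis Hm : is_metric dY.

Lemma m_refl : forall x, dY x x = 0.
Proof. intro x. destruct Hm as [_ [H0 _]]. apply (proj2 (H0 x x I I)); auto. Qed.
Lemma m_sym : forall x y, dY x y = dY y x.
Proof. intros. destruct Hm as [_ [_ [H _]]]. apply H; auto. Qed.
Lemma m_tri : forall x y z, dY x z <= dY x y + dY y z.
Proof. intros. destruct Hm as [_ [_ [_ H]]]. apply H; auto. Qed.
Lemma m_pos : forall x y, 0 <= dY x y.
Proof. intros. destruct Hm as [H _]. apply H; auto. Qed.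
Lemma m_eq : forall x y, dY x y = 0 -> x = y.
Proof. intros. destruct Hm as [_ [H1 _]]. apply (proj1 (H1 x y I I)); auto. Qed.

Hypothesis Hc : compact_metric dY.

Lemma list_bound : forall (A : Type) (g : A -> nat) (l : list A),
  exists K, forall p, In p l -> (g p <= K)%nat.
Proof.
  intros A g l. induction l as [|p l [K HK]].
  - exists 0%nat. intros p [].
  - exists (Nat.max (g p) K). intros q [<-|Hq]; [lia|]. specialize (HK q Hq); lia.
Qed.

Lemma cluster : forall u : nat -> Y, exists a, forall e, 0 < e -> forall K,
  exists k, (K <= k)%nat /\ dY a (u k) < e.
Proof.
  intro u. apply NNPP; intro Hn.
  assert (H : forall a, exists e K, 0 < e /\ forall k, (K <= k)%nat -> e <= dY a (u k)).
  { intro a. apply NNPP; intro H1. apply Hn. exists a. intros e he K.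
    apply NNPP; intro H2. apply H1. exists e, K. split; auto. intros k hk.
    destruct (Rlt_or_le (dY a (u k)) e) as [h|h]; auto. exfalso; apply H2; exists k; auto. }
  set (I := {p : Y * R * nat | 0 < snd (fst p) /\ forall k, (snd p <= k)%nat -> snd (fst p) <= dY (fst (fst p)) (u k)}).
  set (U := fun (p : I) x => dY (fst (fst (proj1_sig p))) x < snd (fst (proj1_sig p))).
  destruct (Hc I U) as [l Hl].
  - intros [[[a e] K] [he HK]] x Hx. unfold U in *; simpl in *.
    exists (e - dY a x). split; [lra|]. intros y _ Hy. pose proof (m_tri a x y). lra.
  - intro x. destruct (H x) as [e [K [he HK]]].
    exists (exist _ (x, e, K) (conj he HK)). unfold U; simpl. rewrite m_refl. lra.
  - destruct (list_bound I (fun p => snd (proj1_sig p)) l) as [K HK].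
    destruct (Hl (u K)) as [[[[a e] K'] [he HK']] [Hin HU]].
    unfold U in HU; simpl in HU. specialize (HK _ Hin). simpl in HK.
    pose proof (HK' K HK) as HK2. simpl in HK2. lra.
Qed.

Lemma unif_cont : forall (Z : Type) (dZ : Z -> Z -> R), is_metric dZ ->
  forall g, continuous_metric dY dZ g ->
  forall eps, 0 < eps -> exists eta, 0 < eta /\ forall x y, dY x y < eta -> dZ (g x) (g y) < eps.
Proof.
  intros Z dZ HZ g Hg eps he. apply NNPP; intro Hn.
  assert (H : forall k, exists p : Y * Y, dY (fst p) (snd p) < / INR (S k) /\ eps <= dZ (g (fst p)) (g (snd p))).
  { intro k. apply NNPP; intro H1. apply Hn. exists (/ INR (S k)). split; [apply inv_pos|].
    intros x y Hxy. destruct (Rlt_or_le (dZ (g x) (g y)) eps) as [h|h]; auto.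
    exfalso; apply H1; exists (x, y); auto. }
  destruct (functional_choice _ H) as [uv Huv].
  destruct (cluster (fun k => fst (uv k))) as [a Ha].
  destruct (Hg a (eps/2)) as [r [hr Hr]]; [lra|].
  destruct (arch_inv (r/2)) as [K0 HK0]; [lra|].
  destruct (Ha (r/2) ltac:(lra) K0) as [k [hk Hk]].
  destruct (Huv k) as [H1 H2].
  specialize (HK0 k hk).
  pose proof (m_tri a (fst (uv k)) (snd (uv k))).
  assert (A1 := Hr (fst (uv k)) ltac:(lra)).
  assert (A2 := Hr (snd (uv k)) ltac:(lra)).
  destruct HZ as [_ [_ [Hs Ht]]].
  pose proof (Ht (g (fst (uv k))) (g a) (g (snd (uv k))) I I I).
  rewrite (Hs (g (fst (uv k))) (g a)) in H3 by auto.
  lra.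
Qed.
End Gen.

Section Lim.
Variable T : nat -> Type.
Variable d : forall n, T n -> T n -> R.
Variable pi : forall n, T (S n) -> T n.
Hypothesis Hmet : forall n, is_metric (d n).
Hypothesis Hcpt : forall n, compact_metric (d n).
Hypothesis Hpi : forall n, continuous_metric (d (S n)) (d n) (pi n).

Definition pthread (M : nat) (y : forall n, T n) : Prop :=
  forall n, (n < M)%nat -> pi n (y (S n)) = y n.

Lemma pthread_weak : forall M m y, pthread M y -> (m <= M)%nat -> pthread m y.
Proof. intros M m y H hm n hn. apply H; lia. Qed.

Lemma inv_pthread : forall M y, inv_lim pi y -> pthread M y.
Proof. intros M y H n _. apply H. Qed.

Lemma sub_ex : forall N (v : nat -> T N), exists p : (nat -> nat) * T N,
  forall j, (j <= fst p j)%nat /\ d N (snd p) (v (fst p j)) < / INR (S j).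
Proof.
  intros N v. destruct (cluster _ _ (Hmet N) (Hcpt N) v) as [a Ha].
  assert (H : forall j, exists k, (j <= k)%nat /\ d N a (v k) < / INR (S j)).
  { intro j. apply Ha. apply inv_pos. }
  destruct (functional_choice _ H) as [phi Hphi]. exists (phi, a). simpl. auto.
Qed.

Section Diag.
Variable y : nat -> forall n, T n.
Hypothesis Hy : forall k, pthread k (y k).

Definition subsel N (v : nat -> T N) := proj1_sig (constructive_indefinite_description _ (sub_ex N v)).
Lemma subsel_spec : forall N v j, (j <= fst (subsel N v) j)%nat /\
   d N (snd (subsel N v)) (v (fst (subsel N v) j)) < / INR (S j).
Proof. intros N v. exact (proj2_sig (constructive_indefinite_description _ (sub_ex N v))). Qed.

Fixpoint sq (N : nat) : nat -> nat :=
  match N with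
  | O => fun j => j
  | S N' => fun j => sq N' (fst (subsel N' (fun j => y (sq N' j) N')) j)
  end.
Definition lima N := snd (subsel N (fun j => y (sq N j) N)).

Lemma lima_spec : forall N j, d N (lima N) (y (sq (S N) j) N) < / INR (S j).
Proof. intros N j. exact (proj2 (subsel_spec N (fun j => y (sq N j) N) j)). Qed.

Lemma sq_comp : forall m N j, exists j', (j <= j')%nat /\ sq (m + N) j = sq N j'.
Proof.
  induction m as [|m IH]; intros N j.
  - exists j. simpl. auto.
  - simpl. destruct (IH N (fst (subsel (m + N) (fun j0 => y (sq (m + N) j0) (m + N))) j)) as [j' [h1 h2]].
    exists j'. split; [|exact h2].
    pose proof (proj1 (subsel_spec (m + N) (fun j0 => y (sq (m + N) j0) (m + N)) j)). lia.
Qed.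

Definition tq j := sq (S j) j.

Lemma tq_ge : forall j, (j <= tq j)%nat.
Proof.
  intro j. unfold tq. destruct (sq_comp (S j) 0 j) as [j' [h1 h2]].
  rewrite Nat.add_0_r in h2. rewrite h2. simpl. exact h1.
Qed.

Lemma tq_spec : forall N j, (N <= j)%nat -> d N (lima N) (y (tq j) N) < / INR (S j).
Proof.
  intros N j hj. unfold tq.
  destruct (sq_comp (j - N) (S N) j) as [j' [h1 h2]].
  replace (j - N + S N)%nat with (S j) in h2 by lia. rewrite h2.
  pose proof (lima_spec N j').
  assert (/ INR (S j') <= / INR (S j)).
  { apply Rinv_le_contravar. apply lt_0_INR; lia. apply le_INR; lia. }
  lra.
Qed.

Lemma lima_thread : inv_lim pi lima.
Proof.
  intro N. symmetry. apply (m_eq _ _ (Hmet N)).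
  apply Rle_antisym; [|apply (m_pos _ _ (Hmet N))].
  apply Rnot_lt_le. intro hpos.
  set (e := d N (lima N) (pi N (lima (S N)))) in *.
  destruct (Hpi N (lima (S N)) (e/2)) as [r [hr Hr]]; [lra|].
  destruct (arch_inv (Rmin r (e/2))) as [K HK]; [apply Rmin_glb_lt; lra|].
  set (j := Nat.max K (S N)).
  assert (A1 := tq_spec N j ltac:(lia)).
  assert (A2 := tq_spec (S N) j ltac:(lia)).
  assert (A3 := HK j ltac:(lia)).
  pose proof (Rmin_l r (e/2)). pose proof (Rmin_r r (e/2)).
  assert (A4 := Hr (y (tq j) (S N)) ltac:(lra)).
  rewrite (Hy (tq j) N) in A4 by (pose proof (tq_ge j); lia).
  pose proof (m_tri _ _ (Hmet N) (lima N) (y (tq j) N) (pi N (lima (S N)))).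
  rewrite (m_sym _ _ (Hmet N) (y (tq j) N)) in H1.
  unfold e in *. lra.
Qed.

Lemma diag : exists a, inv_lim pi a /\ forall e, 0 < e -> forall K N,
  exists k, (K <= k)%nat /\ forall i, (i <= N)%nat -> d i (a i) (y k i) < e.
Proof.
  exists lima. split; [exact lima_thread|].
  intros e he K N. destruct (arch_inv e he) as [K0 HK0].
  exists (tq (Nat.max K (Nat.max N K0))). split.
  - pose proof (tq_ge (Nat.max K (Nat.max N K0))). lia.
  - intros i hi. pose proof (tq_spec i (Nat.max K (Nat.max N K0)) ltac:(lia)).
    pose proof (HK0 (Nat.max K (Nat.max N K0)) ltac:(lia)). lra.
Qed.
End Diag.
End Lim.

Section Main.
Variable T : nat -> Type.
Variable d : forall n, T n -> T n -> R.
Variable f : forall n, T n -> T n.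
Variable pi : forall n, T (S n) -> T n.
Hypothesis Hmet : forall n, is_metric (d n).
Hypothesis Hcpt : forall n, compact_metric (d n).
Hypothesis Hf : forall n, continuous_metric (d n) (d n) (f n).
Hypothesis Hpi : forall n, continuous_metric (d (S n)) (d n) (pi n).
Hypothesis Hcomm : forall n (x : T (S n)), f n (pi n x) = pi n (f (S n) x).
Variable D : (forall n, T n) -> (forall n, T n) -> R.
Hypothesis HD : is_metric_on (inv_lim pi) D.
Hypothesis HDtop : induces_product_topology d (inv_lim pi) D.

Let X := inv_lim pi.

Lemma D_refl : forall a, X a -> D a a = 0.
Proof. intros a Xa. destruct HD as [_ [H _]]. apply (proj2 (H a a Xa Xa)); auto. Qed.
Lemma D_sym : forall a b, X a -> X b -> D a b = D b a.
Proof. intros a b Xa Xb. destruct HD as [_ [_ [H _]]]. apply H; auto. Qed.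
Lemma D_tri : forall a b c, X a -> X b -> X c -> D a c <= D a b + D b c.
Proof. intros a b c Xa Xb Xc. destruct HD as [_ [_ [_ H]]]. apply H; auto. Qed.

Lemma D_to_coord : forall a, X a -> forall n e, 0 < e -> exists r, 0 < r /\
  forall z, X z -> D a z < r -> d n (a n) (z n) < e.
Proof.
  intros a Xa n e he.
  set (U := fun z => X z /\ d n (a n) (z n) < e).
  assert (HU : prod_open_on d X U).
  { intros x [Xx Hx]. exists n, (e - d n (a n) (x n)). split; [lra|].
    intros y Xy Hy. split; auto. specialize (Hy n (le_n n)).
    pose proof (m_tri _ _ (Hmet n) (a n) (x n) (y n)). lra. }
  assert (HU' := proj2 (HDtop U (fun z Hz => proj1 Hz)) HU).
  destruct (HU' a) as [eps [heps H]].
  { split; auto. rewrite (m_refl _ _ (Hmet n)). lra. }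
  exists eps. split; auto. intros z Xz Hz. apply (H z Xz Hz).
Qed.

Lemma coord_to_D : forall a, X a -> forall r, 0 < r -> exists N e, 0 < e /\
  forall z, X z -> (forall i, (i <= N)%nat -> d i (a i) (z i) < e) -> D a z < r.
Proof.
  intros a Xa r hr.
  set (U := fun z => X z /\ D a z < r).
  assert (HU : metric_open_on X D U).
  { intros x [Xx Hx]. exists (r - D a x). split; [lra|].
    intros y Xy Hy. split; auto. pose proof (D_tri a x y Xa Xx Xy). lra. }
  assert (HU' := proj1 (HDtop U (fun z Hz => proj1 Hz)) HU).
  destruct (HU' a) as [N [e [he H]]].
  { split; auto. rewrite D_refl; auto. }
  exists N, e. split; auto. intros z Xz Hz. apply (H z Xz Hz).
Qed.

Lemma U1 : forall n eps, 0 < eps -> exists eta, 0 < eta /\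
  forall y z, X y -> X z -> D y z < eta -> d n (y n) (z n) < eps.
Proof.
  intros n eps he. apply NNPP; intro Hn.
  assert (H : forall k, exists p : (forall n, T n) * (forall n, T n),
    X (fst p) /\ X (snd p) /\ D (fst p) (snd p) < / INR (S k) /\ eps <= d n (fst p n) (snd p n)).
  { intro k. apply NNPP; intro H1. apply Hn. exists (/ INR (S k)). split; [apply inv_pos|].
    intros y z Xy Xz Hyz. destruct (Rlt_or_le (d n (y n) (z n)) eps) as [h|h]; auto.
    exfalso; apply H1; exists (y, z); auto. }
  destruct (functional_choice _ H) as [yz Hyz].
  destruct (diag T d pi Hmet Hcpt Hpi (fun k => fst (yz k))) as [a [Xa Ha]].
  { intro k. apply inv_pthread. apply (Hyz k). }
  destruct (D_to_coord a Xa n (eps/2)) as [r [hr Hr]]; [lra|].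
  destruct (coord_to_D a Xa (r/2)) as [N [e [he' He]]]; [lra|].
  destruct (arch_inv (r/2)) as [K0 HK0]; [lra|].
  destruct (Ha e he' K0 N) as [k [hk Hk]].
  destruct (Hyz k) as [X1 [X2 [H1 H2]]].
  pose proof (HK0 k hk).
  assert (A1 := He _ X1 Hk).
  pose proof (D_tri a (fst (yz k)) (snd (yz k)) Xa X1 X2).
  assert (A2 := Hr _ X1 ltac:(lra)).
  assert (A3 := Hr _ X2 ltac:(lra)).
  pose proof (m_tri _ _ (Hmet n) (fst (yz k) n) (a n) (snd (yz k) n)).
  rewrite (m_sym _ _ (Hmet n) (fst (yz k) n) (a n)) in H4. lra.
Qed.

Lemma U2 : forall r, 0 < r -> exists N e, 0 < e /\
  forall y z, X y -> X z -> (forall i, (i <= N)%nat -> d i (y i) (z i) < e) -> D y z < r.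
Proof.
  intros r hr. apply NNPP; intro Hn.
  assert (H : forall k, exists p : (forall n, T n) * (forall n, T n),
    X (fst p) /\ X (snd p) /\ (forall i, (i <= k)%nat -> d i (fst p i) (snd p i) < / INR (S k))
    /\ r <= D (fst p) (snd p)).
  { intro k. apply NNPP; intro H1. apply Hn. exists k, (/ INR (S k)). split; [apply inv_pos|].
    intros y z Xy Xz Hyz. destruct (Rlt_or_le (D y z) r) as [h|h]; auto.
    exfalso; apply H1; exists (y, z); auto. }
  destruct (functional_choice _ H) as [yz Hyz].
  destruct (diag T d pi Hmet Hcpt Hpi (fun k => fst (yz k))) as [a [Xa Ha]].
  { intro k. apply inv_pthread. apply (Hyz k). }
  destruct (coord_to_D a Xa (r/2)) as [N [e [he He]]]; [lra|].
  destruct (arch_inv (e/2)) as [K0 HK0]; [lra|].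
  destruct (Ha (e/2) ltac:(lra) (Nat.max K0 N) N) as [k [hk Hk]].
  destruct (Hyz k) as [X1 [X2 [H1 H2]]].
  pose proof (HK0 k ltac:(lia)).
  assert (A1 := He _ X1 ltac:(intros i hi; specialize (Hk i hi); lra)).
  assert (A2 : D a (snd (yz k)) < r/2).
  { apply He; auto. intros i hi. specialize (Hk i hi). specialize (H1 i ltac:(lia)).
    pose proof (m_tri _ _ (Hmet i) (a i) (fst (yz k) i) (snd (yz k) i)). lra. }
  pose proof (D_tri (fst (yz k)) a (snd (yz k)) X1 Xa X2).
  rewrite (D_sym (fst (yz k)) a) in H3 by auto. lra.
Qed.

Lemma desc : forall N e, 0 < e -> exists e', 0 < e' /\ forall y z, pthread T pi N y -> pthread T pi N z ->
  d N (y N) (z N) < e' -> forall i, (i <= N)%nat -> d i (y i) (z i) < e.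
Proof.
  induction N as [|N IH]; intros e he.
  - exists e. split; auto. intros y z _ _ H i hi. replace i with 0%nat by lia. auto.
  - destruct (IH e he) as [e1 [he1 H1]].
    destruct (unif_cont _ _ (Hmet (S N)) (Hcpt (S N)) _ _ (Hmet N) (pi N) (Hpi N) e1 he1) as [e2 [he2 H2]].
    exists (Rmin e e2). split; [apply Rmin_glb_lt; auto|].
    intros y z Hy Hz Hyz i hi.
    pose proof (Rmin_l e e2). pose proof (Rmin_r e e2).
    destruct (Nat.eq_dec i (S N)) as [->|hne]; [lra|].
    apply H1; try (apply pthread_weak with (S N); auto; lia); [|lia].
    rewrite <- (Hy N), <- (Hz N) by lia. apply H2. lra.
Qed.

Lemma U2' : forall r, 0 < r -> exists N e, 0 < e /\
  forall y z, X y -> X z -> d N (y N) (z N) < e -> D y z < r.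
Proof.
  intros r hr. destruct (U2 r hr) as [N [e [he H]]].
  destruct (desc N e he) as [e' [he' H']].
  exists N, e'. split; auto. intros y z Xy Xz Hyz. apply H; auto.
  apply H'; auto; apply inv_pthread; auto.
Qed.

Lemma lift : forall N e, 0 < e -> exists M, (N <= M)%nat /\
  forall y, pthread T pi M y -> exists z, X z /\ d N (z N) (y N) < e.
Proof.
  intros N e he. apply NNPP; intro Hn.
  assert (H : forall k, exists y, pthread T pi (k + N) y /\ forall z, X z -> e <= d N (z N) (y N)).
  { intro k. apply NNPP; intro H1. apply Hn. exists (k + N)%nat. split; [lia|].
    intros y Hy. apply NNPP; intro H2. apply H1. exists y. split; auto.
    intros z Xz. destruct (Rlt_or_le (d N (z N) (y N)) e) as [h|h]; auto.
    exfalso; apply H2; exists z; auto. }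
  destruct (functional_choice _ H) as [yk Hyk].
  destruct (diag T d pi Hmet Hcpt Hpi yk) as [a [Xa Ha]].
  { intro k. apply pthread_weak with (k + N)%nat; [apply (Hyk k)|lia]. }
  destruct (Ha e he 0%nat N) as [k [_ Hk]].
  specialize (Hk N (le_n N)). pose proof (proj2 (Hyk k) a Xa). lra.
Qed.

Definition upd (y : forall n, T n) (m : nat) (w : T m) : forall n, T n :=
  fun n => match Nat.eq_dec m n with left h => eq_rect m T w n h | right _ => y n end.

Lemma upd_eq : forall y m w, upd y m w m = w.
Proof.
  intros y m w. unfold upd. destruct (Nat.eq_dec m m) as [h|h]; [|congruence].
  symmetry. apply Eqdep_dec.eq_rect_eq_dec. exact Nat.eq_dec.
Qed.
Lemma upd_ne : forall y m w n, m <> n -> upd y m w n = y n.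
Proof. intros y m w n h. unfold upd. destruct (Nat.eq_dec m n); congruence. Qed.

Lemma pthread_ex : forall (x0 : forall n, T n) M (w : T M), exists y, pthread T pi M y /\ y M = w.
Proof.
  intros x0 M. induction M as [|M IH]; intro w.
  - exists (upd x0 0 w). split; [intros n hn; lia|apply upd_eq].
  - destruct (IH (pi M w)) as [y [Hy HyM]].
    exists (upd y (S M) w). split; [|apply upd_eq].
    intros n hn. rewrite (upd_ne y (S M) w n) by lia.
    destruct (Nat.eq_dec n M) as [->|hne].
    + rewrite upd_eq. auto.
    + rewrite upd_ne by lia. apply Hy. lia.
Qed.

Lemma lim_pthread : forall M y, pthread T pi M y -> pthread T pi M (lim_map f y).
Proof. intros M y H n hn. unfold lim_map. rewrite <- Hcomm. rewrite H; auto. Qed.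

Lemma lim_X : forall y, X y -> X (lim_map f y).
Proof. intros y H n. unfold lim_map. rewrite <- Hcomm. rewrite H; auto. Qed.

Theorem main : forall x : forall n, T n,
    CR_on (inv_lim pi) D (lim_map f) x <->
    (inv_lim pi x /\ forall n, CR (d n) (f n) (x n)).
Proof.
  intro x. split.
  - intros [Xx Hc]. split; auto. intro n. split; [exact I|]. intros delta hd.
    destruct (U1 n delta hd) as [eta [heta Heta]].
    destruct (Hc (eta/2)) as [k [c [hk [Xc [c0 [ck Hch]]]]]]; [lra|].
    exists k, (fun i => c i n). split; auto. split; [intros; exact I|].
    split; [rewrite c0; auto|]. split; [rewrite ck; auto|].
    intros i hi. left.
    apply (Heta (lim_map f (c i)) (c (S i))).
    + apply lim_X, Xc; lia.
    + apply Xc; lia.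
    + specialize (Hch i hi). lra.
  - intros [Xx Hn]. split; auto. intros delta hd.
    destruct (U2' delta hd) as [N [e1 [he1 H1]]].
    destruct (unif_cont _ _ (Hmet N) (Hcpt N) _ _ (Hmet N) (f N) (Hf N) (e1/3)) as [e2 [he2 H2]]; [lra|].
    set (e3 := Rmin (e1/3) e2).
    assert (he3 : 0 < e3) by (apply Rmin_glb_lt; lra).
    pose proof (Rmin_l (e1/3) e2). pose proof (Rmin_r (e1/3) e2). fold e3 in H, H0.
    destruct (lift N e3 he3) as [M [hM HL]].
    destruct (desc M e3 he3) as [e4 [he4 H4]].
    destruct (Hn M) as [_ HcM].
    destruct (HcM (e4/2)) as [k [c [hk [_ [c0 [ck Hch]]]]]]; [lra|].
    assert (HY : forall i, exists y, pthread T pi M y /\ y M = c i).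
    { intro i. apply pthread_ex. exact x. }
    destruct (functional_choice _ HY) as [Y HYs].
    assert (HZ : forall i, exists z, X z /\ d N (z N) (Y i N) < e3 /\ ((i = 0 \/ i = k)%nat -> z = x)).
    { intro i. destruct (classic (i = 0 \/ i = k)%nat) as [hi|hi].
      - exists x. split; auto. split; auto.
        assert (Hci : c i = x M) by (destruct hi as [->| ->]; auto).
        destruct (HYs i) as [HYi HYM].
        apply (H4 x (Y i) (inv_pthread T pi M x Xx) HYi); [|exact hM].
        rewrite HYM, Hci, (m_refl _ _ (Hmet M)). lra.
      - destruct (HL (Y i) (proj1 (HYs i))) as [z [Xz Hz]].
        exists z. split; auto. split; auto. intros []; tauto. }
    destruct (functional_choice _ HZ) as [Z HZs].
    exists k, Z. split; auto. split; [intros i _; apply (HZs i)|].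
    split; [apply (HZs 0%nat); auto|]. split; [apply (HZs k); auto|].
    intros i hi. left.
    destruct (HZs i) as [Xi [Di _]]. destruct (HZs (S i)) as [XSi [DSi _]].
    apply H1; [apply lim_X; auto|auto|].
    unfold lim_map.
    assert (B1 : d N (f N (Z i N)) (f N (Y i N)) < e1/3) by (apply H2; lra).
    destruct (HYs i) as [HYi HYiM]. destruct (HYs (S i)) as [HYSi HYSiM].
    assert (B2 : d N (f N (Y i N)) (Y (S i) N) < e3).
    { apply (H4 (lim_map f (Y i)) (Y (S i)) (lim_pthread M _ HYi) HYSi); [|exact hM].
      unfold lim_map. rewrite HYiM, HYSiM. specialize (Hch i hi). lra. }
    pose proof (m_tri _ _ (Hmet N) (f N (Z i N)) (f N (Y i N)) (Y (S i) N)).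
    pose proof (m_tri _ _ (Hmet N) (f N (Z i N)) (Y (S i) N) (Z (S i) N)).
    rewrite (m_sym _ _ (Hmet N) (Y (S i) N) (Z (S i) N)) in *. lra.
Qed.
End Main.

Theorem lemma3p1 (T : nat -> Type) (d : forall n, T n -> T n -> R)
  (f : forall n, T n -> T n) (pi : forall n, T (S n) -> T n)
  (Hmet : forall n, is_metric (d n))
  (Hcpt : forall n, compact_metric (d n))
  (Hf : forall n, continuous_metric (d n) (d n) (f n))
  (Hpi : forall n, continuous_metric (d (S n)) (d n) (pi n))
  (Hcomm : forall n (x : T (S n)), f n (pi n x) = pi n (f (S n) x))
  (D : (forall n, T n) -> (forall n, T n) -> R)
  (HD : is_metric_on (inv_lim pi) D)
  (HDtop : induces_product_topology d (inv_lim pi) D) :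
  forall x : forall n, T n,
    CR_on (inv_lim pi) D (lim_map f) x <->
    (inv_lim pi x /\ forall n, CR (d n) (f n) (x n)).
Proof.
  exact (main T d f pi Hmet Hcpt Hf Hpi Hcomm D HD HDtop).
Qed.
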